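(* There exists an infinite maximal triangle-free graph which satisfies property $\mathscr{D}_k$ for every $k\ge1$ but which is not a blow-up of any finite graph.
   Context: A (possibly infinite) graph is maximal triangle-free if it contains no triangle but adding any new edge between non-adjacent vertices creates a triangle. Property $\mathscr{D}_k$: for every $m\in\{1,\dots,k\}$ and every sequence $x_1,\dots,x_{3m}$ of (not necessarily distinct) vertices there is a vertex $y$ with $|\{i\in[3m]: x_iy\in E(G)\}|\ge m+1$. A blow-up of $H$ is any graph obtained by replacing each vertex of $H$ by a non-empty independent set (possibly infinite) and each edge of $H$ by the complete bipartite graph between the corresponding sets, with no further edges. *)

(* Defs.v *)
From Stdlib Require Import Arith List.
Import ListNotations.

Record graph := Graph {
  vert : Type;
  adj : vert -> vert -> Prop;
  adj_sym : forall x y, adj x y -> adj y x;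
  adj_irrefl : forall x, ~ adj x x
}.

Definition infinite_graph (G : graph) : Prop :=
  forall l : list (vert G), exists v, ~ In v l.

Definition triangle_free (G : graph) : Prop :=
  ~ exists x y z : vert G, adj G x y /\ adj G y z /\ adj G x z.

(* Maximal triangle-free: triangle-free, and adding any new edge xy between
   distinct non-adjacent vertices creates a triangle, i.e. x and y have a
   common neighbour. *)
Definition maximal_triangle_free (G : graph) : Prop :=
  triangle_free G /\
  forall x y : vert G, x <> y -> ~ adj G x y ->
    exists z, adj G x z /\ adj G z y.

Definition at_least_indices (n c : nat) (P : nat -> Prop) : Prop :=
  exists S : list nat, NoDup S /\
    (forall i, In i S -> i < n /\ P i) /\ c <= length S.

(* Property D_k: for every m in {1,..,k} and every sequence x_1..x_{3m}
   (indexed here by 0..3m-1, entries beyond are irrelevant) there is a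
   vertex y adjacent to at least m+1 of the x_i (counted with index). *)
Definition property_D (k : nat) (G : graph) : Prop :=
  forall m : nat, 1 <= m -> m <= k ->
  forall x : nat -> vert G,
    exists y : vert G, at_least_indices (3 * m) (m + 1) (fun i => adj G (x i) y).

Record fin_graph := FinGraph {
  fg_n : nat;
  fg_adj : nat -> nat -> Prop;
  fg_sym : forall a b, a < fg_n -> b < fg_n -> fg_adj a b -> fg_adj b a;
  fg_irrefl : forall a, a < fg_n -> ~ fg_adj a a
}.

(* G is a blow-up of H: the vertex set of G is partitioned into non-empty
   classes f^{-1}(a), a a vertex of H (f surjective), each class is
   independent and two vertices are adjacent iff their classes are adjacent
   in H (complete bipartite between classes of an edge, no further edges). *)
Definition is_blowup_of (G : graph) (H : fin_graph) : Prop :=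
  exists f : vert G -> nat,
    (forall v, f v < fg_n H) /\
    (forall a, a < fg_n H -> exists v, f v = a) /\
    (forall u v, adj G u v <-> fg_adj H (f u) (f v)).

Definition is_blowup_of_finite_graph (G : graph) : Prop :=
  exists H : fin_graph, is_blowup_of G H.

(* Main.v *)
Require Import Defs.
From Stdlib Require Import Arith List.
From Stdlib Require Import Reals Lra Lia ZArith Classical ClassicalEpsilon.
Import ListNotations.

Open Scope R_scope.

Definition dyadic (x:R) : Prop := exists (a:Z) (k:nat), x = IZR a / 2^k.

Lemma dy_Z z : dyadic (IZR z).
Proof. exists z, 0%nat. simpl. field. Qed.

Lemma dy_add x y : dyadic x -> dyadic y -> dyadic (x+y).
Proof.
  intros [a [k ->]] [b [l ->]].
  exists (a * 2^(Z.of_nat l) + b * 2^(Z.of_nat k))%Z, (k+l)%nat.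
  rewrite plus_IZR, !mult_IZR, <- !pow_IZR, pow_add.
  field; split; apply pow_nonzero; lra.
Qed.

Lemma dy_opp x : dyadic x -> dyadic (-x).
Proof. intros [a [k ->]]. exists (-a)%Z, k. rewrite opp_IZR. field. apply pow_nonzero; lra. Qed.

Lemma dy_sub x y : dyadic x -> dyadic y -> dyadic (x-y).
Proof. intros. unfold Rminus. apply dy_add; auto. apply dy_opp; auto. Qed.

Lemma dy_half x : dyadic x -> dyadic (x/2).
Proof. intros [a [k ->]]. exists a, (S k). simpl. field. apply pow_nonzero; lra. Qed.

Lemma dy_sub1 d : dyadic d -> dyadic (d - 1).
Proof. intros H. apply dy_sub; auto. apply (dy_Z 1). Qed.

Lemma pow2_mod3 k : (2 ^ Z.of_nat k mod 3 = 1 \/ 2 ^ Z.of_nat k mod 3 = 2)%Z.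
Proof.
  induction k. left; reflexivity.
  rewrite Nat2Z.inj_succ, Z.pow_succ_r by lia.
  rewrite Z.mul_mod by lia.
  destruct IHk as [E|E]; rewrite E; [right|left]; reflexivity.
Qed.

Lemma dy_third d z : dyadic d -> d <> IZR z + 1/3.
Proof.
  intros [a [k ->]] H.
  assert (Hp : 2^k <> 0) by (apply pow_nonzero; lra).
  assert (H2 : (3 * a = (3*z+1) * 2 ^ Z.of_nat k)%Z).
  { apply eq_IZR. rewrite !mult_IZR, plus_IZR, <- pow_IZR.
    replace (IZR a) with ((IZR a / 2^k) * 2^k) by (field; auto).
    rewrite H, mult_IZR. field. }
  pose proof (pow2_mod3 k) as HK.
  set (K := (2 ^ Z.of_nat k)%Z) in *.
  assert (E: (3*a = 3*(z*K) + K)%Z) by (rewrite H2; ring). clear H2.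
  generalize dependent (z*K)%Z. intros w E.
  assert (K = 3 * (a - w))%Z by lia. rewrite H0 in HK.
  rewrite Z.mul_comm, Z_mod_mult in HK. lia.
Qed.

Lemma INR_lt_pow2 N : INR N < 2^N.
Proof.
  induction N. simpl; lra. rewrite S_INR. simpl.
  pose proof (pow_R1_Rle 2 N). lra.
Qed.

Lemma density a b : a < b -> exists d, dyadic d /\ a < d < b.
Proof.
  intros Hab.
  assert (Hr : 0 < 1/(b-a)) by (unfold Rdiv; apply Rmult_lt_0_compat; [lra|apply Rinv_0_lt_compat; lra]).
  destruct (archimed (1/(b-a))) as [H1 _].
  assert (Hz : (0 <= up (1/(b-a)))%Z) by (apply le_IZR; lra).
  set (N := Z.to_nat (up (1/(b-a)))).
  assert (HN : INR N = IZR (up (1/(b-a)))) by (unfold N; rewrite INR_IZR_INZ, Z2Nat.id; auto).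
  pose proof (INR_lt_pow2 N).
  assert (HKp : 0 < 2^N) by (apply pow_lt; lra).
  assert (Hinv : 1/(b-a) * (b-a) = 1) by (field; lra).
  assert (HK : 1 < 2^N * (b-a)) by nra.
  destruct (archimed (a*2^N)) as [H3 H4].
  exists (IZR (up (a*2^N)) / 2^N). split.
  - exists (up (a*2^N)), N. reflexivity.
  - assert (IZR (up (a*2^N)) / 2^N * 2^N = IZR (up (a*2^N))) by (field; lra).
    split; nra.
Qed.

Lemma argmin (n:nat) (P : nat -> Prop) (h : nat -> R) :
  (exists i, (i < n)%nat /\ P i) ->
  exists i0, (i0 < n)%nat /\ P i0 /\ forall i, (i<n)%nat -> P i -> h i0 <= h i.
Proof.
  induction n; intros [i [Hi Pi]]. lia.
  destruct (classic (exists i, (i<n)%nat /\ P i)) as [Hex|Hno].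
  - destruct (IHn Hex) as [i0 [Hi0 [Pi0 Hmin]]].
    destruct (classic (P n)) as [Pn|nPn].
    + destruct (Rle_dec (h i0) (h n)).
      * exists i0. repeat split; auto. intros j Hj Pj.
        destruct (Nat.eq_dec j n). subst; auto. apply Hmin; auto; lia.
      * exists n. repeat split; auto. intros j Hj Pj.
        destruct (Nat.eq_dec j n). subst; lra.
        specialize (Hmin j ltac:(lia) Pj). lra.
    + exists i0. repeat split; auto. intros j Hj Pj.
      destruct (Nat.eq_dec j n). subst; contradiction. apply Hmin; auto; lia.
  - assert (i = n).
    { destruct (Nat.eq_dec i n); auto. exfalso; apply Hno; exists i; split; auto; lia. }
    subst i. exists n. split; [lia|split; auto]. intros j Hj Pj.
    destruct (Nat.eq_dec j n). subst; lra.
    exfalso; apply Hno; exists j; split; auto; lia.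
Qed.

Definition bP (P:Prop) : bool := if excluded_middle_informative P then true else false.
Lemma bP_iff P : bP P = true <-> P.
Proof. unfold bP; destruct excluded_middle_informative; split; auto; try discriminate; contradiction. Qed.

Fixpoint cnt (b : nat -> bool) (n:nat) : nat :=
  match n with 0 => 0%nat | S n' => (cnt b n' + (if b n' then 1 else 0))%nat end.

Lemma cnt_mono b1 b2 n : (forall i, (i<n)%nat -> b1 i = true -> b2 i = true) ->
  (cnt b1 n <= cnt b2 n)%nat.
Proof.
  induction n; simpl; intros H. lia.
  specialize (IHn (fun i Hi => H i ltac:(lia))).
  destruct (b1 n) eqn:E1. rewrite (H n ltac:(lia) E1). lia. destruct (b2 n); lia.
Qed.

Lemma cnt_false n : cnt (fun _ => false) n = 0%nat.
Proof. induction n; simpl; lia. Qed.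

Lemma cnt_strict b1 b2 n j : (j<n)%nat -> b1 j = false -> b2 j = true ->
  (forall i, (i<n)%nat -> b1 i = true -> b2 i = true) -> (cnt b1 n + 1 <= cnt b2 n)%nat.
Proof.
  induction n; intros Hj E1 E2 H. lia. simpl.
  destruct (Nat.eq_dec j n).
  - subst. rewrite E1, E2. pose proof (cnt_mono b1 b2 n (fun i Hi => H i ltac:(lia))). lia.
  - assert (cnt b1 n + 1 <= cnt b2 n)%nat.
    { apply IHn; [lia|auto|auto|intros; apply H; auto; lia]. }
    destruct (b1 n) eqn:E; [rewrite (H n ltac:(lia) E); lia | destruct (b2 n); lia].
Qed.

Lemma cnt_cover b1 b2 b3 n :
  (forall i, (i<n)%nat -> b1 i = true \/ b2 i = true \/ b3 i = true) ->
  (n <= cnt b1 n + cnt b2 n + cnt b3 n)%nat.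
Proof.
  induction n; simpl; intros H. lia.
  specialize (IHn (fun i Hi => H i ltac:(lia))).
  destruct (H n ltac:(lia)) as [E|[E|E]]; rewrite E;
  destruct (b1 n), (b2 n), (b3 n); lia.
Qed.

Lemma cnt_list (b : nat -> bool) (P : nat -> Prop) n :
  (forall i, (i<n)%nat -> b i = true -> P i) ->
  exists S, NoDup S /\ (forall i, In i S -> (i<n)%nat /\ P i) /\ length S = cnt b n.
Proof.
  induction n; intros H.
  - exists []. split; [constructor|]. split; [intros i []|reflexivity].
  - destruct (IHn (fun i Hi => H i ltac:(lia))) as [S [HN [HS HL]]]. simpl.
    destruct (b n) eqn:E.
    + exists (n :: S). split. constructor; auto. intro Hin. apply HS in Hin. lia.
      split. intros i [<-|Hi]. split; [lia| apply H; auto; lia].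
      destruct (HS i Hi); split; [lia|auto]. simpl. lia.
    + exists S. split; auto. split. intros i Hi; destruct (HS i Hi); split; [lia|auto]. lia.
Qed.

Lemma cnt_atleast (b: nat -> bool) (P: nat -> Prop) n c :
  (c <= cnt b n)%nat -> (forall i, (i<n)%nat -> b i = true -> P i) -> at_least_indices n c P.
Proof.
  intros Hc H. destruct (cnt_list b P n H) as [S [HN [HS HL]]].
  exists S. split; auto. split; auto. lia.
Qed.

Definition V := {x : R | (0 <= x < 1) /\ dyadic x}.
Definition pos (v:V) : R := proj1_sig v.
Definition adjR (u v : V) : Prop := 1/3 < Rabs (pos u - pos v) < 2/3.

Lemma adjR_sym u v : adjR u v -> adjR v u.
Proof. unfold adjR; rewrite Rabs_minus_sym; auto. Qed.

Lemma adjR_irr u : ~ adjR u u.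
Proof. unfold adjR. replace (pos u - pos u) with 0 by ring. rewrite Rabs_R0. lra. Qed.

Definition G : graph := Graph V adjR adjR_sym adjR_irr.

Lemma pos_bounds v : 0 <= pos v < 1.
Proof. destruct v as [x [H H']]; simpl; auto. Qed.
Lemma pos_dy v : dyadic (pos v).
Proof. destruct v as [x [H' H]]; simpl; auto. Qed.

Definition mk (x:R) (H: 0<=x<1) (D: dyadic x) : V := exist _ x (conj H D).

Ltac dj := first [ lra | (split; dj) | (left; dj) | (right; dj) ].

Ltac rabs := unfold Rabs in *; repeat match goal with
  | |- context [Rcase_abs ?e] => destruct (Rcase_abs e)
  | H: context [Rcase_abs ?e] |- _ => destruct (Rcase_abs e)
  end.

Lemma dist_ne u v : Rabs (pos u - pos v) <> 1/3 /\ Rabs (pos u - pos v) <> 2/3.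
Proof.
  pose proof (pos_bounds u); pose proof (pos_bounds v).
  assert (Hd : dyadic (pos u - pos v)) by (apply dy_sub; apply pos_dy).
  assert (Hnd : dyadic (-(pos u - pos v))) by (apply dy_opp; auto).
  pose proof (dy_third _ 0 Hd) as A1. pose proof (dy_third _ (-1) Hd) as A2.
  pose proof (dy_third _ 0 Hnd) as A3. pose proof (dy_third _ (-1) Hnd) as A4.
  split; intro E; rabs;
  first [apply A1; lra | apply A2; lra | apply A3; lra | apply A4; lra].
Qed.

Lemma tri_free : triangle_free G.
Proof.
  intros [x [y [z [H1 [H2 H3]]]]]. simpl in *. unfold adjR in *.
  pose proof (pos_bounds x); pose proof (pos_bounds y); pose proof (pos_bounds z).
  rabs; lra.
Qed.

Lemma maximal : maximal_triangle_free G.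
Proof.
  split. apply tri_free.
  intros x y _ Hn. simpl in *. unfold adjR in *.
  pose proof (pos_bounds x) as Bx; pose proof (pos_bounds y) as By.
  destruct (dist_ne x y) as [N1 N2].
  pose proof (pos_dy x) as Dx; pose proof (pos_dy y) as Dy.
  destruct (Rlt_dec (Rabs (pos x - pos y)) (1/3)) as [Hc|Hc].
  - assert (Dc : dyadic ((pos x + pos y)/2 + 1/2)).
    { apply dy_add. apply dy_half, dy_add; auto. apply (dy_half 1 (dy_Z 1)). }
    destruct (Rlt_dec ((pos x + pos y)/2 + 1/2) 1).
    + assert (B : 0 <= (pos x + pos y)/2 + 1/2 < 1) by lra.
      exists (mk _ B Dc). unfold pos at 2 3; simpl. fold (pos x) (pos y).
      clear Hn N1 N2; rabs; dj.
    + assert (B : 0 <= (pos x + pos y)/2 + 1/2 - 1 < 1) by lra.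
      exists (mk _ B (dy_sub1 _ Dc)). unfold pos at 2 3; simpl. fold (pos x) (pos y).
      clear Hn N1 N2; rabs; dj.
  - assert (Hf : Rabs (pos x - pos y) > 2/3).
    { destruct (Rlt_dec (Rabs (pos x - pos y)) (2/3)).
      - exfalso. apply Hn. split; auto.
        destruct (Rle_lt_or_eq_dec (1/3) (Rabs (pos x - pos y))); auto. lra. congruence.
      - destruct (Rle_lt_or_eq_dec (2/3) (Rabs (pos x - pos y))); auto. lra. congruence. }
    assert (Dc : dyadic ((pos x + pos y)/2)) by (apply dy_half, dy_add; auto).
    assert (B : 0 <= (pos x + pos y)/2 < 1) by lra.
    exists (mk _ B Dc). unfold pos at 2 3; simpl. fold (pos x) (pos y).
    clear Hn N1 N2; rabs; dj.
Qed.

Lemma above (l : list V) : exists v, forall u, In u l -> pos u < pos v.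
Proof.
  induction l as [|a l IH].
  - assert (B : 0 <= 0 < 1) by lra. exists (mk 0 B (dy_Z 0)). intros u [].
  - destruct IH as [v Hv].
    pose proof (pos_bounds a); pose proof (pos_bounds v).
    destruct (Rle_dec (pos a) (pos v)).
    + assert (B : 0 <= (pos v + 1)/2 < 1) by lra.
      exists (mk _ B (dy_half _ (dy_add _ _ (pos_dy v) (dy_Z 1)))).
      intros u [<-|Hu]; unfold pos at 2; simpl; fold (pos v); [lra|].
      specialize (Hv u Hu). lra.
    + assert (B : 0 <= (pos a + 1)/2 < 1) by lra.
      exists (mk _ B (dy_half _ (dy_add _ _ (pos_dy a) (dy_Z 1)))).
      intros u [<-|Hu]; unfold pos at 2; simpl; fold (pos a); [lra|].
      specialize (Hv u Hu). lra.
Qed.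

Lemma infinite : infinite_graph G.
Proof.
  intro l. destruct (above l) as [v Hv]. exists v. intro Hin.
  specialize (Hv v Hin). lra.
Qed.

Lemma php N (g : nat -> nat) : (forall k, (k <= N)%nat -> (g k < N)%nat) ->
  exists i j, (i < j <= N)%nat /\ g i = g j.
Proof.
  revert g. induction N as [|N IH]; intros g Hg.
  - specialize (Hg 0%nat (le_n _)); lia.
  - destruct (classic (exists i, (i <= N)%nat /\ g i = g (S N))) as [[i [Hi E]]|Hno].
    + exists i, (S N). split; [lia|auto].
    + set (g' k := if Nat.eq_dec (g k) N then g (S N) else g k).
      assert (H : forall k, (k <= N)%nat -> (g' k < N)%nat).
      { intros k Hk. unfold g'. destruct (Nat.eq_dec (g k) N).
        - pose proof (Hg (S N) (le_n _)).
          destruct (Nat.eq_dec (g (S N)) N). exfalso; apply Hno; exists k; split; auto; lia. lia.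
        - pose proof (Hg k ltac:(lia)). lia. }
      destruct (IH g' H) as [i [j [Hij E]]]. unfold g' in E.
      destruct (Nat.eq_dec (g i) N), (Nat.eq_dec (g j) N).
      * exists i, j. split; [lia|congruence].
      * exfalso; apply Hno; exists j; split; [lia|auto].
      * exfalso; apply Hno; exists i; split; [lia|auto].
      * exists i, j. split; [lia|auto].
Qed.

Lemma not_blowup : ~ is_blowup_of_finite_graph G.
Proof.
  intros [H [f [Hf [_ Hadj]]]]. simpl in *.
  assert (Key : forall u v : V, pos u < pos v < 1/4 -> f u <> f v).
  { intros u v Huv E. pose proof (pos_bounds u); pose proof (pos_bounds v).
    destruct (density (pos u + 1/3) (pos v + 1/3)) as [d [Dd Hd]]. lra.
    assert (B : 0 <= d < 1) by lra.
    set (w := mk d B Dd).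
    assert (A1 : adjR u w). { unfold adjR, w. unfold pos at 2; simpl. rabs; dj. }
    assert (A2 : ~ adjR v w). { unfold adjR, w. unfold pos at 2; simpl. rabs; lra. }
    apply A2. apply Hadj. rewrite <- E. apply Hadj. auto. }
  set (N := fg_n H).
  assert (HKp : 0 < 2^(N+2)) by (apply pow_lt; lra).
  assert (Hq : forall k, (k <= N)%nat -> 0 <= INR k / 2^(N+2) < 1/4 /\ dyadic (INR k / 2^(N+2))).
  { intros k Hk. split.
    - pose proof (pos_INR k). pose proof (INR_lt_pow2 N). pose proof (le_INR _ _ Hk).
      rewrite pow_add in *. simpl in *.
      assert (INR k / (2^N * (2*(2*1))) * (2^N * (2*(2*1))) = INR k) by (field; lra).
      split; nra.
    - exists (Z.of_nat k), (N+2)%nat. rewrite INR_IZR_INZ. reflexivity. }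
  assert (q14 : 1/4 < 1) by lra.
  set (q k := match le_lt_dec k N with
              | left Hk => mk _ (conj (proj1 (proj1 (Hq k Hk))) (Rlt_trans _ (1/4) 1 (proj2 (proj1 (Hq k Hk))) q14)) (proj2 (Hq k Hk))
              | right _ => mk 0 (conj (Rle_refl 0) Rlt_0_1) (dy_Z 0) end).
  destruct (php N (fun k => f (q k))) as [i [j [Hij E]]].
  { intros k Hk. apply Hf. }
  apply (Key (q i) (q j)); auto.
  unfold q. destruct (le_lt_dec i N); [|lia]. destruct (le_lt_dec j N); [|lia].
  unfold pos, mk; simpl.
  pose proof (Hq j l0) as [[_ Hj] _]. split; auto.
  unfold Rdiv. apply Rmult_lt_compat_r. apply Rinv_0_lt_compat; auto. apply lt_INR. lia.
Qed.

Definition Fw (s p : R) : Prop := (s <= p /\ p < s + 1/3) \/ (s <= p + 1 /\ p + 1 < s + 1/3).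
Definition Ww (t p : R) : Prop := (t < p /\ p <= t + 1/3) \/ (t < p + 1 /\ p + 1 <= t + 1/3)
   \/ (t < p+2 /\ p+2 <= t+1/3).
Definition Lw (t p : R) : R := if Rlt_dec t p then p else if Rlt_dec t (p+1) then p+1 else p+2.
Definition Lf (s p : R) : R := if Rle_dec s p then p else p+1.


Lemma cover t p : 0 <= t < 1 -> 0 <= p < 1 -> Ww t p \/ Ww (t+1/3) p \/ Ww (t+2/3) p.
Proof.
  intros. unfold Ww.
  destruct (Rlt_le_dec t p);
  [destruct (Rle_lt_dec p (t+1/3)); [|destruct (Rle_lt_dec p (t+2/3))]
  |destruct (Rle_lt_dec (p+1) (t+1/3)); [|destruct (Rle_lt_dec (p+1) (t+2/3))]]; dj.
Qed.

Lemma W_L t p : 0 <= p < 1 -> Ww t p -> t < Lw t p <= t + 1/3.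
Proof.
  unfold Ww, Lw; intros Hp [[? ?]|[[? ?]|[? ?]]];
  destruct (Rlt_dec t p); try destruct (Rlt_dec t (p+1)); split; lra.
Qed.

Lemma key_min t p q : 0<=p<1 -> 0<=q<1 -> Ww t p -> Ww t q -> Lw t q <= Lw t p -> Fw q p.
Proof.
  intros Hp Hq Wp Wq Hle.
  pose proof (W_L t p Hp Wp). pose proof (W_L t q Hq Wq).
  unfold Lw, Fw in *.
  destruct (Rlt_dec t p); try destruct (Rlt_dec t (p+1));
  destruct (Rlt_dec t q); try destruct (Rlt_dec t (q+1)); dj.
Qed.

Lemma le_neq_lt a b : a <= b -> a <> b -> a < b.
Proof. intros H1 H2. destruct (Rle_lt_or_eq_dec a b H1); auto. contradiction. Qed.

Lemma key_strict s p : 0 <= s < 1 -> 0 <= p < 1 -> p <> s + 1/3 -> p + 1 <> s + 1/3 ->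
  Ww s p -> Fw s p.
Proof.
  intros Hs Hp N1 N2 [[A B]|[[A B]|[A B]]]; unfold Fw.
  - left. split. lra. apply le_neq_lt; auto.
  - right. split. lra. apply le_neq_lt; auto.
  - exfalso; lra.
Qed.

Lemma not_W_self s : 0 <= s < 1 -> ~ Ww s s.
Proof. unfold Ww; intros H [[? ?]|[[? ?]|[? ?]]]; lra. Qed.

Lemma F_self s : Fw s s.
Proof. left; lra. Qed.

Lemma D_main (m:nat) (x : nat -> V) : (1 <= m)%nat ->
  exists y : V, at_least_indices (3*m) (m+1) (fun i => adjR (x i) y).
Proof.
  intros Hm.
  destruct (classic (exists j, (j < 3*m)%nat /\
      (m+1 <= cnt (fun i => bP (Fw (pos (x j)) (pos (x i)))) (3*m))%nat)) as [[j [Hj Hc]]|Hno].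
  - set (s := pos (x j)) in *.
    pose proof (pos_bounds (x j)) as Bs. fold s in Bs.
    destruct (argmin (3*m) (fun i => Fw s (pos (x i))) (fun i => - Lf s (pos (x i))))
      as [i1 [Hi1 [HF1 Hmax]]].
    { exists j; split; auto; apply F_self. }
    set (M := Lf s (pos (x i1))).
    pose proof (pos_bounds (x i1)).
    assert (HM : s <= M < s + 1/3).
    { unfold M, Lf. destruct (Rle_dec s (pos (x i1))); destruct HF1 as [[? ?]|[? ?]]; split; lra. }
    destruct (density (M + 1/3) (s + 2/3)) as [d [Dd Hd]]. lra.
    assert (Hgood : forall y : V, (pos y = d \/ pos y = d - 1) ->
       at_least_indices (3*m) (m+1) (fun i => adjR (x i) y)).
    { intros y Hy. apply cnt_atleast with (b := fun i => bP (Fw s (pos (x i)))); auto.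
      intros i Hi Hb. apply (proj1 (bP_iff _)) in Hb.
      specialize (Hmax i Hi Hb). fold M in Hmax.
      pose proof (pos_bounds (x i)). pose proof (pos_bounds y).
      unfold adjR, Lf, Fw in *.
      destruct (Rle_dec s (pos (x i))); destruct Hb as [[? ?]|[? ?]];
      destruct Hy as [Hy|Hy]; rewrite Hy in *; rabs; dj. }
    destruct (Rlt_dec d 1).
    + assert (B : 0 <= d < 1) by lra. exists (mk d B Dd). apply Hgood. left; reflexivity.
    + assert (B : 0 <= d - 1 < 1) by lra. exists (mk _ B (dy_sub1 _ Dd)). apply Hgood. right; reflexivity.
  - exfalso.
    assert (Hb : forall j, (j < 3*m)%nat ->
        (cnt (fun i => bP (Fw (pos (x j)) (pos (x i)))) (3*m) <= m)%nat).
    { intros j Hj. destruct (Nat.le_gt_cases (cnt (fun i => bP (Fw (pos (x j)) (pos (x i)))) (3*m)) m); auto.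
      exfalso; apply Hno; exists j; split; auto; lia. }
    set (gt t := cnt (fun i => bP (Ww t (pos (x i)))) (3*m)).
    assert (Hg : forall t, (gt t <= m)%nat).
    { intro t. destruct (classic (exists i, (i < 3*m)%nat /\ Ww t (pos (x i)))) as [Hex|Hne].
      - destruct (argmin (3*m) (fun i => Ww t (pos (x i))) (fun i => Lw t (pos (x i))) Hex)
          as [i0 [Hi0 [W0 Hmin]]].
        eapply Nat.le_trans; [|apply (Hb i0 Hi0)].
        apply cnt_mono. intros i Hi Hw. apply (proj2 (bP_iff _)). apply (proj1 (bP_iff _)) in Hw.
        apply key_min with t; auto using pos_bounds.
      - unfold gt. apply Nat.le_trans with (cnt (fun _ => false) (3*m)).
        2:{ rewrite cnt_false. lia. }
        apply cnt_mono.
        intros i Hi Hw. apply (proj1 (bP_iff _)) in Hw. exfalso; apply Hne; exists i; split; auto. }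
    set (s := pos (x 0%nat)).
    pose proof (pos_bounds (x 0%nat)) as Bs. fold s in Bs.
    assert (Hs : (gt s + 1 <= m)%nat).
    { eapply Nat.le_trans; [|apply (Hb 0%nat ltac:(lia))]. fold s.
      apply cnt_strict with 0%nat. lia.
      - destruct (bP (Ww s s)) eqn:E; auto. apply (proj1 (bP_iff _)) in E. exfalso; apply (not_W_self s); auto.
      - apply (proj2 (bP_iff _)), F_self.
      - intros i Hi Hw. apply (proj2 (bP_iff _)). apply (proj1 (bP_iff _)) in Hw.
        pose proof (pos_bounds (x i)).
        assert (Dd : dyadic (pos (x i) - s)) by (apply dy_sub; apply pos_dy).
        pose proof (dy_third _ 0 Dd). pose proof (dy_third _ (-1) Dd).
        apply key_strict; auto.
        + intro E. apply H0. lra.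
        + intro E. apply H1. lra. }
    assert (Hc : (3*m <= gt s + gt (s+1/3)%R + gt (s+2/3)%R)%nat).
    { apply cnt_cover. intros i Hi. pose proof (pos_bounds (x i)).
      destruct (cover s (pos (x i)) Bs H) as [C|[C|C]];
      [left|right;left|right;right]; apply (proj2 (bP_iff _)); auto. }
    pose proof (Hg (s+1/3)). pose proof (Hg (s+2/3)). lia.
Qed.

Close Scope R_scope.
Theorem theorem5p2 :
  exists G : graph,
    infinite_graph G /\
    maximal_triangle_free G /\
    (forall k : nat, 1 <= k -> property_D k G) /\
    ~ is_blowup_of_finite_graph G.
Proof.
  exists G. split; [apply infinite|]. split; [apply maximal|]. split; [|apply not_blowup].
  intros k _ m Hm _ x. exact (D_main m x Hm).
Qed.
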